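(* Let $D$ be a BN distribution on $\{0,1\}^n$ with all conditional probabilities in $(0,1)$ and BN-induced basis $\{\phi_S\}$, let $f:\{0,1\}^n\to\{-1,1\}$, $\epsilon\in(0,1]$, $T\ge1$, and suppose there is $g=\sum_{S\in\mathcal{T}}g_S\phi_S$ with $|\mathcal{T}|=T$ and $\mathbb{E}_D[(f-g)^2]\le\epsilon$. Let $\mathcal{S}=\{S:|\hat f_S|\ge\sqrt{\epsilon/T}\}$ (so $|\mathcal{S}|\le T/\epsilon$). Let $\mathcal{S}^*\supseteq\mathcal{S}$ with $|\mathcal{S}^*|\le4T/\epsilon$, and let $\tilde f_S$ ($S\in\mathcal{S}^*$) be numbers with $|\tilde f_S-\hat f_S|\le\gamma$ where $\gamma\le\epsilon^2/(4T)$. Define $h_1=\sum_{S\in\mathcal{S}}\hat f_S\phi_S$, $h_2=\sum_{S\in\mathcal{S}}\tilde f_S\phi_S$, $h_3=\sum_{S\in\mathcal{S}^*}\tilde f_S\phi_S$. Then $\mathbb{E}_D[(f-h_1)^2]\le2\epsilon$, $\mathbb{E}_D[(f-h_2)^2]\le3\epsilon$, and $$P_D[f(X)\neq\operatorname{sign}(h_3(X))]\le\mathbb{E}_D[(f-h_3)^2]\le3\epsilon.$$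
   Context: For a BN with parent sets $\operatorname{pa}(v)$, $\mu_{v,x_{\operatorname{pa}(v)}}=P(X_v=1\mid X_{\operatorname{pa}(v)}=x_{\operatorname{pa}(v)})$, $\sigma_{v,x_{\operatorname{pa}(v)}}=\sqrt{\mu_{v,x_{\operatorname{pa}(v)}}(1-\mu_{v,x_{\operatorname{pa}(v)}})}$, the BN-induced basis is $\phi_v(x)=(x_v-\mu_{v,x_{\operatorname{pa}(v)}})/\sigma_{v,x_{\operatorname{pa}(v)}}$, $\phi_S=\prod_{v\in S}\phi_v$; $\hat f_S=\mathbb{E}_D[f(X)\phi_S(X)]$. *)

(* Defs.v *)
From HB Require Import structures.
From mathcomp Require Import all_boot all_order all_algebra.
Set Implicit Arguments. Unset Strict Implicit. Unset Printing Implicit Defensive.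
Import Order.TTheory GRing.Theory Num.Theory.
Local Open Scope ring_scope.

Definition cube (n : nat) := {ffun 'I_n -> bool}.

(* A Bayesian network on {0,1}^n: parent sets pa, acyclic (there is a rank
   function strictly increasing along every edge u -> v), and conditional
   probability parameters mu v x = P(X_v = 1 | X_pa(v) = x_pa(v)), which may
   only depend on the parent coordinates of x. *)
Definition dag_parents (n : nat) (pa : 'I_n -> {set 'I_n}) : Prop :=
  exists r : 'I_n -> nat, forall u v, u \in pa v -> (r u < r v)%N.

Definition cpt_local (R : rcfType) (n : nat) (pa : 'I_n -> {set 'I_n})
  (mu : 'I_n -> cube n -> R) : Prop :=
  forall v (x y : cube n), (forall u, u \in pa v -> x u = y u) -> mu v x = mu v y.

Definition cpt_interior (R : rcfType) (n : nat) (mu : 'I_n -> cube n -> R) : Prop :=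
  forall v x, 0 < mu v x < 1.

Definition bn_dist (R : rcfType) (n : nat) (mu : 'I_n -> cube n -> R) (x : cube n) : R :=
  \prod_(v < n) (if x v then mu v x else 1 - mu v x).

Definition expect (R : rcfType) (n : nat) (mu : 'I_n -> cube n -> R) (F : cube n -> R) : R :=
  \sum_(x : cube n) bn_dist mu x * F x.

Definition prob (R : rcfType) (n : nat) (mu : 'I_n -> cube n -> R) (P : pred (cube n)) : R :=
  \sum_(x : cube n | P x) bn_dist mu x.

Definition bn_sigma (R : rcfType) (n : nat) (mu : 'I_n -> cube n -> R) v x : R :=
  Num.sqrt (mu v x * (1 - mu v x)).

Definition phi1 (R : rcfType) (n : nat) (mu : 'I_n -> cube n -> R) v (x : cube n) : R :=
  ((x v)%:R - mu v x) / bn_sigma mu v x.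

Definition phiS (R : rcfType) (n : nat) (mu : 'I_n -> cube n -> R) (S : {set 'I_n})
  (x : cube n) : R := \prod_(v in S) phi1 mu v x.

Definition fourier (R : rcfType) (n : nat) (mu : 'I_n -> cube n -> R)
  (f : cube n -> R) (S : {set 'I_n}) : R :=
  expect mu (fun x => f x * phiS mu S x).

Definition expand (R : rcfType) (n : nat) (mu : 'I_n -> cube n -> R)
  (A : {set {set 'I_n}}) (c : {set 'I_n} -> R) (x : cube n) : R :=
  \sum_(S in A) c S * phiS mu S x.

Definition sqerr (R : rcfType) (n : nat) (mu : 'I_n -> cube n -> R)
  (f h : cube n -> R) : R := expect mu (fun x => (f x - h x) ^+ 2).

(* Main.v *)
Require Import Defs.
From HB Require Import structures.
From mathcomp Require Import all_boot all_order all_algebra.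
From mathcomp Require Import ring lra zify.
Set Implicit Arguments. Unset Strict Implicit. Unset Printing Implicit Defensive.
Import Order.TTheory GRing.Theory Num.Theory.
Local Open Scope ring_scope.

Section Ortho.
Variables (R : rcfType) (n : nat) (pa : 'I_n -> {set 'I_n}) (mu : 'I_n -> cube n -> R).
Hypothesis Hloc : cpt_local pa mu.
Hypothesis Hint : cpt_interior mu.

Definition cpt v (x : cube n) : R := if x v then mu v x else 1 - mu v x.
Definition DK (K : {set 'I_n}) x := \prod_(u in K) cpt u x.
Definition flip v (x : cube n) : cube n := [ffun u => if u == v then ~~ x v else x u].

Lemma flip_v v x : flip v x v = ~~ x v.
Proof. by rewrite ffunE eqxx. Qed.
Lemma flip_ne v x u : u != v -> flip v x u = x u.
Proof. by rewrite ffunE => /negbTE ->. Qed.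
Lemma flipK v : involutive (flip v).
Proof.
move=> x; apply/ffunP => u; rewrite !ffunE; case: eqP => [->|//].
by rewrite eqxx negbK.
Qed.

Lemma mu_flip v u x : v \notin pa u -> mu u (flip v x) = mu u x.
Proof.
move=> hv; apply: Hloc => w hw; apply: flip_ne.
by apply/eqP => E; rewrite -E hw in hv.
Qed.

Lemma cpt_flip v u x : u != v -> v \notin pa u -> cpt u (flip v x) = cpt u x.
Proof. by move=> huv hv; rewrite /cpt mu_flip // flip_ne. Qed.

Lemma phi1_flip v u x : u != v -> v \notin pa u -> phi1 mu u (flip v x) = phi1 mu u x.
Proof. by move=> huv hv; rewrite /phi1 /bn_sigma mu_flip // flip_ne. Qed.

Lemma prod_split (F : 'I_n -> R) (K : {set 'I_n}) v :
  \prod_(u in K) F u = (if v \in K then F v else 1) * \prod_(u in K :\ v) F u.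
Proof.
case: ifP => hv.
  rewrite (bigD1 v) //=; congr (_ * _); apply: eq_bigl => u.
  by rewrite in_setD1 andbC.
rewrite mul1r; apply: eq_bigl => u; rewrite in_setD1.
by case: eqP => // ->; rewrite hv.
Qed.

Lemma avg_key (b bS bT : bool) (m : R) : 0 < m < 1 ->
  let s := Num.sqrt (m * (1 - m)) in
  let A c := (if bS then ((c : bool)%:R - m) / s else 1) *
             (if bT then ((c : bool)%:R - m) / s else 1) in
  (if b then m else 1 - m) * A b + (if ~~ b then m else 1 - m) * A (~~ b)
  = (bS == bT)%:R.
Proof.
move=> /andP [m0 m1] s A.
have hp : 0 < m * (1 - m) by rewrite mulr_gt0 // subr_gt0.
have hs : s ^+ 2 = m * (1 - m) by rewrite sqr_sqrtr // ltW.
have s0 : s != 0 by rewrite sqrtr_eq0 -ltNge.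
rewrite {}/A; case: b; case: bS; case: bT => /=.
- transitivity (m * (1 - m) / s ^+ 2); first by field.
  by rewrite hs divff // gt_eqF.
- by rewrite !mulr1; field.
- by rewrite !mul1r; field.
- by rewrite !mulr1; ring.
- transitivity (m * (1 - m) / s ^+ 2); first by field.
  by rewrite hs divff // gt_eqF.
- by rewrite !mulr1; field.
- by rewrite !mul1r; field.
- by rewrite !mulr1; ring.
Qed.


Lemma DK_split (K : {set 'I_n}) (v : 'I_n) (x : cube n) : v \in K -> DK K x = cpt v x * DK (K :\ v) x.
Proof. by move=> vK; rewrite /DK (prod_split _ _ v) vK. Qed.

Lemma phiS_split (S : {set 'I_n}) (v : 'I_n) (x : cube n) :
  phiS mu S x = (if v \in S then phi1 mu v x else 1) * phiS mu (S :\ v) x.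
Proof. exact: prod_split. Qed.

Lemma eqS (S T : {set 'I_n}) (v : 'I_n) :
  (S == T) = ((v \in S) == (v \in T)) && (S :\ v == T :\ v).
Proof.
apply/eqP/andP => [-> | [/eqP h1 /eqP h2]]; first by rewrite !eqxx.
apply/setP => u; case: (u =P v) => [->//|/eqP ne].
by move/setP: h2 => /(_ u); rewrite !in_setD1 ne.
Qed.

Lemma ortho_gen (r : 'I_n -> nat) (Hr : forall u v, u \in pa v -> (r u < r v)%N) k :
  forall K S T : {set 'I_n}, #|K| = k -> S \subset K -> T \subset K ->
  \sum_x DK K x * (phiS mu S x * phiS mu T x) = (2 ^ (n - #|K|))%:R * (S == T)%:R.
Proof.
elim: k => [|k IH] K S T hK hS hT.
  have K0 := cards0_eq hK; subst K.
  move: hS hT; rewrite !subset0 => /eqP -> /eqP ->.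
  rewrite cards0 subn0 eqxx mulr1.
  under eq_bigr do rewrite /DK /phiS !big_set0 !mulr1.
  by rewrite sumr_const card_ffun card_bool card_ord.
have K0 : (0 < #|K|)%N by rewrite hK.
have [v vK vmax] := eq_bigmax_cond r K0.
have hmax u : u \in K -> (r u <= r v)%N by move=> uK; rewrite -vmax; exact: leq_bigmax_cond.
have npa u : u \in K -> v \notin pa u.
  by move=> uK; apply/negP => h; have := Hr _ _ h; rewrite ltnNge hmax.
have hK' : #|K :\ v| = k by move: hK; rewrite (cardsD1 v) vK add1n => -[].
have IH' := IH _ (S :\ v) (T :\ v) hK' (setSD _ hS) (setSD _ hT).
set H := fun x => DK K x * (phiS mu S x * phiS mu T x).
have hflip : \sum_x H x = \sum_x H (flip v x).
  by rewrite (reindex_inj (inv_inj (flipK v))).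
have Dfl x : DK (K :\ v) (flip v x) = DK (K :\ v) x.
  apply: eq_bigr => u; rewrite in_setD1 => /andP [ne uK]; exact: cpt_flip (npa _ uK).
have Pfl (A : {set 'I_n}) x : A \subset K -> phiS mu (A :\ v) (flip v x) = phiS mu (A :\ v) x.
  move=> /subsetP AK; apply: eq_bigr => u; rewrite in_setD1 => /andP [ne uA].
  exact: phi1_flip (npa _ (AK _ uA)).
have pt x : H x + H (flip v x) = ((v \in S) == (v \in T))%:R *
     (DK (K :\ v) x * (phiS mu (S :\ v) x * phiS mu (T :\ v) x)).
  rewrite /H !(DK_split _ vK) (phiS_split S v) (phiS_split T v) (phiS_split S v (flip v x))
    (phiS_split T v (flip v x)) Dfl !Pfl //.
  have cf : cpt v (flip v x) = if ~~ x v then mu v x else 1 - mu v x.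
    by rewrite /cpt flip_v mu_flip // npa.
  have pf : phi1 mu v (flip v x) = ((~~ x v)%:R - mu v x) / Num.sqrt (mu v x * (1 - mu v x)).
    by rewrite /phi1 /bn_sigma flip_v mu_flip // npa.
  rewrite cf pf.
  set D := DK _ x; set PS := phiS _ _ x; set PT := phiS _ _ x.
  have := avg_key (x v) (v \in S) (v \in T) (Hint v x); rewrite /= => <-.
  rewrite /cpt /phi1 /bn_sigma.
  have gen : forall c1 c2 a1 a2 b1 b2 D PS PT : R,
    c1 * D * (a1 * PS * (b1 * PT)) + c2 * D * (a2 * PS * (b2 * PT)) =
    (c1 * (a1 * b1) + c2 * (a2 * b2)) * (D * (PS * PT)) by move=> *; ring.
  exact: gen.
have h2 : 2 * \sum_x H x = ((v \in S) == (v \in T))%:R *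
     ((2 ^ (n - #|K :\ v|))%:R * (S :\ v == T :\ v)%:R).
  rewrite mulr_natl mulr2n {2}hflip -big_split /= -IH' mulr_sumr.
  apply: eq_bigr => x _; exact: pt.
have hlt : (k < n)%N by have := max_card (mem K); rewrite card_ord hK.
have n2 : (2 : R) != 0 by rewrite pnatr_eq0.
apply: (mulfI n2); rewrite h2 hK hK' (eqS S T v) -(subnSK hlt) expnS natrM.
by case: (_ == _); case: (_ == _); rewrite /= ?mulr0 ?mul0r ?mulr1 ?mul1r.
Qed.

Lemma ortho (r : 'I_n -> nat) (Hr : forall u v, u \in pa v -> (r u < r v)%N) S T :
  expect mu (fun x => phiS mu S x * phiS mu T x) = (S == T)%:R.
Proof.
have := ortho_gen Hr (erefl #|[set: 'I_n]|) (subsetT S) (subsetT T).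
rewrite cardsT card_ord subnn expn0 mul1r => <-.
apply: eq_bigr => x _; congr (_ * _); rewrite /bn_dist /DK.
by apply: eq_bigl => u; rewrite in_setT.
Qed.

Lemma bn_ge0 x : 0 <= bn_dist mu x.
Proof.
apply: prodr_ge0 => v _; have /andP [h0 h1] := Hint v x.
by case: (x v); [exact: ltW | rewrite subr_ge0 ltW].
Qed.

Lemma expect_ext F G : (forall x, F x = G x) -> expect mu F = expect mu G.
Proof. by move=> h; apply: eq_bigr => x _; rewrite h. Qed.
Lemma expectD F G : expect mu (fun x => F x + G x) = expect mu F + expect mu G.
Proof. by rewrite /expect -big_split; apply: eq_bigr => x _; rewrite mulrDr. Qed.
Lemma expectZ a F : expect mu (fun x => a * F x) = a * expect mu F.
Proof. by rewrite /expect mulr_sumr; apply: eq_bigr => x _; rewrite mulrCA. Qed.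
Lemma expect_sum (A : {set {set 'I_n}}) F :
  expect mu (fun x => \sum_(S in A) F S x) = \sum_(S in A) expect mu (F S).
Proof.
rewrite /expect exchange_big /=; apply: eq_bigr => x _; by rewrite mulr_sumr.
Qed.

Lemma sqerr_expand (r : 'I_n -> nat) (Hr : forall u v, u \in pa v -> (r u < r v)%N)
  f (A : {set {set 'I_n}}) c :
  sqerr mu f (expand mu A c) = expect mu (fun x => f x ^+ 2) +
    \sum_(S in A) ((c S - fourier mu f S) ^+ 2 - fourier mu f S ^+ 2).
Proof.
rewrite /sqerr.
have e x : (f x - expand mu A c x) ^+ 2 = f x ^+ 2 +
    ((-2) * (\sum_(S in A) c S * (f x * phiS mu S x)) +
    \sum_(S in A) c S * (\sum_(T in A) c T * (phiS mu S x * phiS mu T x))).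
  rewrite /expand.
  have h1 : \sum_(S in A) c S * (f x * phiS mu S x) = f x * \sum_(S in A) c S * phiS mu S x.
    by rewrite mulr_sumr; apply: eq_bigr => S _; ring.
  have h2 : \sum_(S in A) c S * (\sum_(T in A) c T * (phiS mu S x * phiS mu T x)) =
      (\sum_(S in A) c S * phiS mu S x) * (\sum_(S in A) c S * phiS mu S x).
    rewrite mulr_suml; apply: eq_bigr => S _; rewrite !mulr_sumr; apply: eq_bigr => T _; ring.
  rewrite h1 h2; ring.
rewrite (expect_ext e) expectD expectD expectZ !expect_sum.
congr (_ + _).
have h3 S : S \in A -> expect mu (fun x => c S * (f x * phiS mu S x)) = c S * fourier mu f S.
  by move=> _; rewrite expectZ.
have h4 S : S \in A -> expect mu (fun x => c S * (\sum_(T in A) c T * (phiS mu S x * phiS mu T x)))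
    = c S * c S.
  move=> SA; rewrite expectZ expect_sum; congr (_ * _).
  under eq_bigr do rewrite expectZ (ortho Hr).
  rewrite (bigD1 S) //= eqxx mulr1 big1 ?addr0 // => T /andP [_ ne].
  by rewrite eq_sym (negbTE ne) mulr0.
rewrite (eq_bigr _ h3) (eq_bigr _ h4) mulr_sumr -big_split /=.
by apply: eq_bigr => S _; ring.
Qed.

End Ortho.

Theorem mainTheorem16 (R : rcfType) (n : nat)
  (pa : 'I_n -> {set 'I_n}) (mu : 'I_n -> cube n -> R)
  (f : cube n -> R) (eps : R) (T : nat)
  (Tset : {set {set 'I_n}}) (g : {set 'I_n} -> R)
  (Sstar : {set {set 'I_n}}) (ft : {set 'I_n} -> R) (gamma : R) :
  dag_parents pa -> cpt_local pa mu -> cpt_interior mu ->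
  (forall x, f x = 1 \/ f x = -1) ->
  0 < eps <= 1 -> (1 <= T)%N ->
  #|Tset| = T ->
  sqerr mu f (expand mu Tset g) <= eps ->
  let Sset := [set S : {set 'I_n} | Num.sqrt (eps / T%:R) <= `|fourier mu f S|] in
  Sset \subset Sstar ->
  #|Sstar|%:R <= 4 * T%:R / eps ->
  (forall S, S \in Sstar -> `|ft S - fourier mu f S| <= gamma) ->
  gamma <= eps ^+ 2 / (4 * T%:R) ->
  let h1 := expand mu Sset (fourier mu f) in
  let h2 := expand mu Sset ft in
  let h3 := expand mu Sstar ft in
  [/\ #|Sset|%:R <= T%:R / eps,
      sqerr mu f h1 <= 2 * eps,
      sqerr mu f h2 <= 3 * eps,
      prob mu (fun x => f x != Num.sg (h3 x)) <= sqerr mu f h3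
    & sqerr mu f h3 <= 3 * eps].
Proof.
move=> [r Hr] Hloc Hint fpm /andP [e0 e1] T1 hT herr Sset hSS hcard hg hgam h1 h2 h3.
set fh := fourier mu f.
set Q := fun A : {set {set 'I_n}} => \sum_(S in A) fh S ^+ 2.
have E2 : expect mu (fun x => f x ^+ 2) = 1.
  transitivity (expect mu (fun x => phiS mu set0 x * phiS mu set0 x)).
    apply: expect_ext => x; rewrite /phiS big_set0 mulr1.
    by case: (fpm x) => ->; rewrite ?expr1n ?sqrrN ?expr1n.
  by rewrite (ortho Hloc Hint Hr) eqxx.
have SQ A c : sqerr mu f (expand mu A c) =
    1 + \sum_(S in A) (c S - fh S) ^+ 2 - Q A.
  by rewrite (sqerr_expand Hloc Hint Hr) E2 sumrB addrA.
have sq_ge0 F : 0 <= sqerr mu f F.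
  by apply: sumr_ge0 => x _; rewrite mulr_ge0 ?bn_ge0 ?sqr_ge0.
have Qge0 A : 0 <= Q A by apply: sumr_ge0 => S _; rewrite sqr_ge0.
have SQ1 A : sqerr mu f (expand mu A fh) = 1 - Q A.
  rewrite SQ big1 ?addr0 // => S _; by rewrite subrr expr0n.
have Bessel A : Q A <= 1 by have := sq_ge0 (expand mu A fh); rewrite SQ1 subr_ge0.
have T0 : 0 < T%:R :> R by rewrite ltr0n.
have T1' : 1 <= T%:R :> R by rewrite ler1n.
set a := eps / T%:R.
have a0 : 0 < a by rewrite divr_gt0.
have hbig S : S \in Sset -> a <= fh S ^+ 2.
  rewrite inE => h.
  have s0 : 0 <= Num.sqrt a by rewrite sqrtr_ge0.
  have : Num.sqrt a ^+ 2 <= `|fh S| ^+ 2.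
    by move: h s0; set u := Num.sqrt a; set w := `|fh S|; move=> *; nra.
  by rewrite sqr_sqrtr ?(ltW a0) // real_normK ?num_real.
have hsmall S : S \notin Sset -> fh S ^+ 2 <= a.
  rewrite inE -ltNge => h.
  have s0 : 0 <= `|fh S| by rewrite normr_ge0.
  have : `|fh S| ^+ 2 <= Num.sqrt a ^+ 2.
    by move: h s0; set u := Num.sqrt a; set w := `|fh S|; move=> *; nra.
  by rewrite sqr_sqrtr ?(ltW a0) // real_normK ?num_real.
have hc : #|Sset|%:R <= T%:R / eps.
  have : #|Sset|%:R * a <= 1.
    apply: le_trans (Bessel Sset); rewrite mulr_natl -sumr_const /Q.
    by apply: ler_sum => S; exact: hbig.
  by rewrite /a mulrA ler_pdivrMr // mul1r ler_pdivlMr.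
have g0 : 0 <= eps ^+ 2 / (4 * T%:R) by rewrite divr_ge0 // ?sqr_ge0 // mulr_ge0.
have small (A : {set {set 'I_n}}) : A \subset Sstar -> #|A|%:R <= 4 * T%:R / eps ->
    \sum_(S in A) (ft S - fh S) ^+ 2 <= eps.
  move=> /subsetP AS hA.
  set G := eps ^+ 2 / (4 * T%:R) in g0 hgam *.
  have hs : \sum_(S in A) (ft S - fh S) ^+ 2 <= G ^+ 2 *+ #|A|.
    rewrite -sumr_const; apply: ler_sum => S SA.
    have h := hg S (AS _ SA); have hh := hgam; have h0 := normr_ge0 (ft S - fh S).
    rewrite -[(ft S - fh S) ^+ 2]real_normK ?num_real //; nra.
  apply: le_trans hs _.
  rewrite -mulr_natl.
  apply: le_trans (_ : 4 * T%:R / eps * G ^+ 2 <= eps).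
    by rewrite ler_wpM2r // sqr_ge0.
  have -> : 4 * T%:R / eps * G ^+ 2 = eps ^+ 3 / (4 * T%:R).
    rewrite /G; field; rewrite ?gt_eqF //; lra.
  rewrite ler_pdivrMr; last by lra.
  nra.
have Qsub (A B : {set {set 'I_n}}) : A \subset B -> Q A <= Q B.
  move=> AB; rewrite /Q (big_setID (A := B) A) /= (setIidPr AB) lerDl.
  by apply: sumr_ge0 => S _; rewrite sqr_ge0.
have hTQ : 1 - Q Tset <= eps.
  apply: le_trans herr; rewrite SQ lerD2r lerDl.
  by apply: sumr_ge0 => S _; rewrite sqr_ge0.
have hTS : Q (Tset :\: Sset) <= eps.
  apply: le_trans (_ : a *+ #|Tset :\: Sset| <= eps).
    rewrite -sumr_const; apply: ler_sum => S; rewrite inE => /andP [nS _].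
    exact: hsmall.
  rewrite -mulr_natl; apply: le_trans (_ : T%:R * a <= eps).
    apply: ler_wpM2r; first exact: ltW.
    by rewrite ler_nat -hT subset_leq_card // subsetDl.
  by rewrite /a mulrC divfK // gt_eqF.
have hQS : 1 - Q Sset <= 2 * eps.
  have e : Q Tset = Q (Tset :&: Sset) + Q (Tset :\: Sset).
    by rewrite /Q (big_setID (A := Tset) Sset).
  have : Q (Tset :&: Sset) <= Q Sset by apply: Qsub; exact: subsetIr.
  lra.
have hcS : #|Sset|%:R <= 4 * T%:R / eps.
  apply: le_trans hc _; rewrite ler_pM2r ?invr_gt0 //; lra.
split => //.
- by rewrite /h1 SQ1.
- rewrite /h2 SQ; have := small _ hSS hcS; lra.
- rewrite /prob /sqerr /expect big_mkcond /=; apply: ler_sum => x _.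
  case: ifP => [hne|_]; last by rewrite mulr_ge0 ?bn_ge0 ?sqr_ge0.
  rewrite -{1}[bn_dist mu x]mulr1; apply: ler_wpM2l; first exact: bn_ge0.
  set h := h3 x in hne *.
  case: (fpm x) => fx; rewrite fx in hne *.
  + case: (ltrP 0 h) => hh; first by rewrite gtr0_sg // eqxx in hne.
    nra.
  + case: (ltrP h 0) => hh; first by rewrite ltr0_sg // eqxx in hne.
    nra.
- rewrite /h3 SQ; have := small _ (subxx _) hcard.
  have := Qsub _ _ hSS; rewrite /Q /= in hQS *; lra.
Qed.
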